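(* Let $p\ge5$ be prime, $n\ge1$, $a=(p-1)/(p-1,12)$, $b=(p+1)/(p+1,12)$. Define the $(n+1)\times(n+1)$ matrix $M=(M_{ij})_{i,j=0}^n$ by $M_{ij}=p^i/24$ if $j\ge n/2$ and $i\le j$; $M_{ij}=p^{2j-i}/24$ if $j\ge n/2$ and $i>j$; $M_{ij}=p^{n-i}/24$ if $j<n/2$ and $i\ge j$; $M_{ij}=p^{n+i-2j}/24$ if $j<n/2$ and $i<j$. Then $\det M=(ab)^np^{(n-1)(3n-1)/4}/24$ if $n$ is odd, and $\det M=(ab)^np^{n(3n-4)/4}/24$ if $n$ is even.
   Context: Note $ab=(p^2-1)/24$ for $p\ge5$. ($M_{ij}$ is the order of $\eta(p^i\tau)$ at a cusp of level $p^j$ of $X_0(p^n)$.) *)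

(* Defs.v *)
From HB Require Import structures.
From mathcomp Require Import all_boot all_order all_algebra.
Set Implicit Arguments. Unset Strict Implicit. Unset Printing Implicit Defensive.
Import Order.TTheory GRing.Theory Num.Theory.
Local Open Scope ring_scope.

(* The (n+1)x(n+1) matrix M_{ij}, i,j = 0..n, with rational entries.
   "j >= n/2" is read as the real inequality, i.e. 2*j >= n in nat.
   All exponents are natural numbers in their respective cases. *)
Definition Mentry (p n i j : nat) : rat :=
  if (n <= 2 * j)%N then
    (if (i <= j)%N then (p ^ i)%:R / 24 else (p ^ (2 * j - i))%:R / 24)
  else
    (if (j <= i)%N then (p ^ (n - i))%:R / 24 else (p ^ (n + i - 2 * j))%:R / 24).

Definition Mmat (p n : nat) : 'M[rat]_(n.+1) :=
  \matrix_(i < n.+1, j < n.+1) Mentry p n i j.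

Definition a_of (p : nat) : nat := (p - 1) %/ gcdn (p - 1) 12.
Definition b_of (p : nat) : nat := (p + 1) %/ gcdn (p + 1) 12.

(* Main.v *)
From HB Require Import structures.
From mathcomp Require Import all_boot all_order all_algebra all_fingroup.
From mathcomp Require Import zify ring lra.
Require Import Defs.
Import Order.TTheory GRing.Theory Num.Theory.
Local Open Scope ring_scope.

Definition cc (n : nat) : nat := ((n - 1) %/ 2)%N.
Definition lam (p n : nat) : rat := if odd n then (p%:R)^-1 else 1.
Definition ee (p n j : nat) : rat := if j == cc n then lam p n else 1.
Definition Cm (p n : nat) : 'M[rat]_(n.+1) :=
  \matrix_(k < n.+1, j < n.+1) ((k == j :> nat)%:R -
    (if (j <= cc n)%N then ee p n j * (k == j.+1 :> nat)%:R
     else if ((cc n).+1 < j)%N then (k.+1 == j :> nat)%:R else 0)).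
Definition Tent (p n i j : nat) : rat :=
  if (j <= cc n)%N then Mentry p n i j - ee p n j * Mentry p n i j.+1
  else if ((cc n).+1 < j)%N then Mentry p n i j - Mentry p n i j.-1
  else Mentry p n i j.

Lemma sum_delta (F : nat -> rat) m x :
  \sum_(k < m) F k * (k == x :> nat)%:R = if (x < m)%N then F x else 0.
Proof.
elim: m => [|m IH]; first by rewrite big_ord0.
rewrite big_ord_recr /= IH ltnS; change (nat_of_ord (@ord_max m)) with m.
by case: (ltngtP x m) => h; rewrite ?mulr0 ?addr0 ?mulr1 ?add0r // h.
Qed.

Lemma MC p n : (1 <= n)%N -> Mmat p n *m Cm p n = \matrix_(i < n.+1, j < n.+1) Tent p n i j.
Proof.
move=> hn; apply/matrixP => i j; rewrite !mxE.
under eq_bigr do rewrite !mxE mulrBr.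
rewrite sumrB sum_delta ltn_ord /Tent.
have hc : (cc n < n)%N by rewrite /cc; lia.
case: ifP => hj.
  under eq_bigr do rewrite mulrCA.
  rewrite -mulr_sumr sum_delta ifT; first by rewrite mulrC.
  rewrite ltnS; lia.
case: ifP => hj2.
  have E k : (k.+1 == j :> nat) = (k == j.-1).
    by case: (nat_of_ord j) hj2 => // j' _; rewrite eqSS.
  under eq_bigr do rewrite E.
  by rewrite sum_delta ifT //; have := ltn_ord j; lia.
by rewrite big1 ?subr0 // => k _; rewrite mulr0.
Qed.

Lemma det_gtrig (R : comPzRingType) (m : nat) (A : 'M[R]_m) (f : 'I_m -> nat) :
  injective f -> (forall i j, (f j < f i)%N -> A i j = 0) ->
  \det A = \prod_i A i i.
Proof.
move=> finj HA.
rewrite /determinant (bigD1 1%g) //= odd_perm1 expr0 mul1r.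
rewrite [X in _ + X]big1 ?addr0; first by apply: eq_bigr => i _; rewrite perm1.
move=> s Hs.
suff [i Hi]: exists i, (f (s i) < f i)%N.
  by rewrite (bigD1 i) //= HA // mul0r mulr0.
apply/existsP; apply: contraR Hs; rewrite negb_exists => /forallP H.
have Hle i : (f i <= f (s i))%N by rewrite leqNgt H.
have := leqif_sum (P := predT) (fun i _ => leqif_eq (Hle i)).
have -> : (\sum_(i | predT i) f (s i) = \sum_(i | predT i) f i)%N.
  by rewrite [RHS](reindex_inj (@perm_inj _ s)).
move=> [_]; rewrite eqxx => /esym /forallP Heq.
apply/eqP/permP => i; rewrite perm1.
by apply: finj; apply/eqP; rewrite eq_sym; have := Heq i; rewrite implyTb.
Qed.

Definition gC (n i : nat) : nat :=
  (if (i <= (cc n).+1) then 2 * ((cc n).+1 - i) else 2 * (i - (cc n).+1) - 1)%N.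

Lemma detC p n : \det (Cm p n) = 1.
Proof.
rewrite (@det_gtrig _ _ _ (fun i => gC n i)).
  rewrite big1 // => i _; rewrite mxE eqxx.
  have E : (i == i.+1 :> nat) = false by rewrite eqn_leq ltnn andbF.
  have E' : (i.+1 == i :> nat) = false by rewrite eqn_leq ltnn.
  by case: ifP => _; [|case: ifP => _]; rewrite ?E ?E' ?mulr0 ?subr0.
- move=> i j /= H; apply/val_inj => /=; move: H; rewrite /gC.
  set d := (cc n).+1.
  by case: ifP => ?; case: ifP => ?; lia.
- move=> i j /=; rewrite mxE /gC => H.
  have E1 : (i == j :> nat) = false.
    by apply/negbTE/eqP => E; move: H; rewrite E ltnn.
  rewrite E1; move: H; set c := cc n => H.
  case: ifP => hj; [|case: ifP => hj2].
  + rewrite (_ : (i == j.+1 :> nat) = false) ?mulr0 ?subr0 //.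
    by move: H; case: ifP => ?; case: ifP => ?; lia.
  + rewrite (_ : (i.+1 == j :> nat) = false) ?subr0 //.
    by move: H; case: ifP => ?; case: ifP => ?; lia.
  + by rewrite subr0.
Qed.

Lemma cc_facts n : (1 <= n)%N -> (2 * cc n < n /\ n <= 2 * cc n + 2)%N.
Proof. by rewrite /cc; lia. Qed.

Lemma cc_par n : (1 <= n)%N -> if odd n then n = (2 * cc n + 1)%N else n = (2 * cc n + 2)%N.
Proof.
move=> hn; rewrite /cc; case: ifP => ho.
  have := odd_double_half n; rewrite ho; lia.
have := odd_double_half n; rewrite ho; lia.
Qed.

Definition fT (n i : nat) : nat :=
  (if i <= cc n then i else if i == (cc n).+1 then n else (cc n).+1 + n - i)%N.

Lemma Me_left p n i j : (2 * j < n)%N -> (j <= i)%N -> Mentry p n i j = (p ^ (n - i))%:R / 24.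
Proof. by move=> h1 h2; rewrite /Mentry leqNgt h1 /= h2. Qed.

Lemma Me_right p n i j : (n <= 2 * j)%N -> (i <= j)%N -> Mentry p n i j = (p ^ i)%:R / 24.
Proof. by move=> h1 h2; rewrite /Mentry h1 h2. Qed.

Lemma Me_right2 p n i j : (n <= 2 * j)%N -> (j <= i)%N -> Mentry p n i j = (p ^ (2 * j - i))%:R / 24.
Proof.
move=> h1 h2; rewrite /Mentry h1; case: ifP => // h3.
by rewrite (_ : 2 * j - i = i)%N //; lia.
Qed.


Lemma Tzero p n (i j : nat) : prime p -> (1 <= n)%N -> (i <= n)%N -> (j <= n)%N ->
  (fT n j < fT n i)%N -> Tent p n i j = 0.
Proof.
move=> hp hn hi hj; have [c1 c2] := cc_facts n hn; have hpar := cc_par n hn.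
rewrite /fT /Tent /ee; set c := cc n in c1 c2 hpar *; clearbody c.
case: ifP => h1.
  move=> H; have hij : (j < i)%N.
    move: H; case: ifP => ?; [lia|case: ifP => ?; lia].
  rewrite (@Me_left p n i j); [|lia|lia].
  case: ifP => /eqP hjc.
    rewrite (@Me_right2 p n i j.+1); [|lia|lia].
    rewrite /lam; move: hpar; case: ifP => ho hpar.
      rewrite (_ : (2 * j.+1 - i = (n - i) + 1)%N); last by lia.
      rewrite !natrX exprD expr1.
      have p0 : (p%:R : rat) != 0 by rewrite pnatr_eq0; case: (p) hp.
      by field.
    rewrite (_ : (2 * j.+1 - i = (n - i))%N); last by lia.
    by rewrite mul1r subrr.
  rewrite (@Me_left p n i j.+1) ?mul1r ?subrr //; lia.
move=> H; case: ifP => h2.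
  have E : (j == c.+1) = false by apply/negbTE; rewrite neq_ltn h2 orbT.
  have [k1 k2] : (c.+1 <= i /\ i < j)%N.
    move: H; rewrite E.
    by case: ifP => ?; [|case: ifP => /eqP ?]; lia.
  rewrite (@Me_right p n i j) ?(@Me_right p n i j.-1) ?subrr //; lia.
have hjd : j = c.+1 by lia.
move: H; rewrite hjd eqxx => H; exfalso; move: H; case: ifP => ?; [|case: ifP => /eqP ?]; lia.
Qed.

Section AB.
Local Open Scope nat_scope.
Lemma ab24 p : prime p -> (5 <= p)%N -> (a_of p * b_of p * 24 = (p - 1) * (p + 1))%N.
Proof.
move=> hp hp5.
have h2 : ~~ (2 %| p)%N by apply/negP => /(prime_nt_dvdP hp) H; have := H isT; lia.
have h3 : ~~ (3 %| p)%N by apply/negP => /(prime_nt_dvdP hp) H; have := H isT; lia.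
have g1 : gcdn (p - 1) 12 = gcdn ((p - 1) %% 12) 12 by rewrite gcdn_modl.
have g2 : gcdn (p + 1) 12 = gcdn ((p + 1) %% 12) 12 by rewrite gcdn_modl.
have d1 : (gcdn (p - 1) 12 %| p - 1)%N by apply: dvdn_gcdl.
have d2 : (gcdn (p + 1) 12 %| p + 1)%N by apply: dvdn_gcdl.
have G : (gcdn (p - 1) 12 * gcdn (p + 1) 12 = 24)%N.
  rewrite g1 g2.
  have e1 : ((p - 1) %% 12 = (p %% 12 + 11) %% 12)%N by lia.
  have e2 : ((p + 1) %% 12 = (p %% 12 + 1) %% 12)%N by lia.
  have e3 : (2 %| p)%N = (2 %| p %% 12)%N by lia.
  have e4 : (3 %| p)%N = (3 %| p %% 12)%N by lia.
  have : (p %% 12 < 12)%N by rewrite ltn_mod.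
  rewrite e1 e2; rewrite e3 e4 in h2 h3; move: h2 h3.
  by case: (p %% 12) => [|[|[|[|[|[|[|[|[|[|[|[|r]]]]]]]]]]]].
rewrite /a_of /b_of.
move: d1 d2 G; set g := gcdn (p - 1) 12; set h := gcdn (p + 1) 12.
move=> /dvdnP [x ->] /dvdnP [y ->] G.
have gp : (0 < g)%N by case: g G => //.
have hp' : (0 < h)%N by case: h G => //; rewrite muln0.
rewrite !mulnK // -G; lia.
Qed.
End AB.


Lemma detT p n : prime p -> (1 <= n)%N ->
  \det (\matrix_(i < n.+1, j < n.+1) Tent p n i j) = \prod_(i < n.+1) Tent p n i i.
Proof.
move=> hp hn.
rewrite (@det_gtrig _ _ _ (fun i => fT n i)).
- by apply: eq_bigr => i _; rewrite mxE.
- move=> i j /= H; apply/val_inj => /=; move: H.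
  have [c1 c2] := cc_facts n hn; have hi := ltn_ord i; have hj := ltn_ord j.
  rewrite /fT; set c := cc n in c1 c2 *; clearbody c.
  by case: ifP => ?; [|case: ifP => /eqP ?]; case: ifP => ?; try case: ifP => /eqP ?; lia.
- move=> i j H; rewrite mxE; apply: Tzero => //; rewrite -ltnS; exact: ltn_ord.
Qed.

Lemma Me_left2 p n i j : (2 * j < n)%N -> (i < j)%N -> Mentry p n i j = (p ^ (n + i - 2 * j))%:R / 24.
Proof. by move=> h1 h2; rewrite /Mentry leqNgt h1 /= leqNgt h2. Qed.

Definition Q (p : nat) : rat := ((p%:R) ^+ 2 - 1) / 24.

Lemma diagA p n i : prime p -> (2 <= n)%N -> (i <= cc n)%N ->
  Tent p n i i = (p%:R) ^+ (n - 2 - i) * Q p.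
Proof.
move=> hp hn hi.
have [c1 c2] := cc_facts n (ltnW hn); have hpar := cc_par n (ltnW hn).
have p0 : (p%:R : rat) != 0 by rewrite pnatr_eq0; case: (p) hp.
rewrite /Tent hi /ee /Q; set c := cc n in c1 c2 hpar hi *.
rewrite (@Me_left p n i i) //; try lia.
case: ifP => /eqP hic.
  rewrite (@Me_right p n i i.+1); try lia.
  have e1 : (p ^ (n - i))%:R = (p%:R : rat) ^+ (n - 2 - i) * p%:R ^+ 2.
    by rewrite -exprD natrX; congr (_ ^+ _); lia.
  rewrite e1 /lam; move: hpar; case: ifP => ho hpar.
    have e2 : (p ^ i)%:R = (p%:R : rat) ^+ (n - 2 - i) * p%:R.
      by rewrite -exprSr natrX; congr (_ ^+ _); lia.
    by rewrite e2; field.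
  have e2 : (p ^ i)%:R = (p%:R : rat) ^+ (n - 2 - i).
    by rewrite natrX; congr (_ ^+ _); lia.
  by rewrite e2; field.
rewrite (@Me_left2 p n i i.+1); try lia.
have e1 : (p ^ (n - i))%:R = (p%:R : rat) ^+ (n - 2 - i) * p%:R ^+ 2.
  by rewrite -exprD natrX; congr (_ ^+ _); lia.
have e2 : (p ^ (n + i - 2 * i.+1))%:R = (p%:R : rat) ^+ (n - 2 - i).
  by rewrite natrX; congr (_ ^+ _); lia.
by rewrite e1 e2; field.
Qed.

Lemma diagD p n : (1 <= n)%N -> Tent p n (cc n).+1 (cc n).+1 = (p%:R) ^+ (cc n).+1 / 24.
Proof.
move=> hn; have [c1 c2] := cc_facts n hn.
rewrite /Tent ltnn ifF; last by apply/negbTE; rewrite -ltnNge.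
by rewrite (@Me_right p n) ?natrX //; lia.
Qed.

Lemma diagC p n i : prime p -> (1 <= n)%N -> ((cc n).+1 < i)%N -> (i <= n)%N ->
  Tent p n i i = (p%:R) ^+ (i - 2) * Q p.
Proof.
move=> hp hn h1 h2; have [c1 c2] := cc_facts n hn.
have p0 : (p%:R : rat) != 0 by rewrite pnatr_eq0; case: (p) hp.
rewrite /Tent h1 ifF; last by apply/negbTE; rewrite -ltnNge; lia.
rewrite (@Me_right p n i i) ?(@Me_right2 p n i i.-1); try lia.
have e1 : (p ^ i)%:R = (p%:R : rat) ^+ (i - 2) * p%:R ^+ 2.
  by rewrite -exprD natrX; congr (_ ^+ _); lia.
have e2 : (p ^ (2 * i.-1 - i))%:R = (p%:R : rat) ^+ (i - 2).
  by rewrite natrX; congr (_ ^+ _); lia.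
by rewrite e1 e2 /Q; field.
Qed.

Lemma sumAP a m : ((\sum_(0 <= i < m) (a + i)) * 2 + m = m * (2 * a + m))%N.
Proof.
elim: m => [|m IH]; first by rewrite big_geq.
rewrite big_nat_recr //=; nia.
Qed.

Lemma S1eq n c : (c + 2 <= n)%N ->
  (\sum_(0 <= i < c.+1) (n - 2 - i) = \sum_(0 <= i < c.+1) ((n - 2 - c) + i))%N.
Proof.
move=> h; rewrite big_nat_rev; apply: eq_big_nat => i /andP [_ hi] /=; lia.
Qed.

Lemma S2eq n c : (c.+2 <= n.+1)%N ->
  (\sum_(c.+2 <= i < n.+1) (i - 2) = \sum_(0 <= i < n.+1 - c.+2) (c + i))%N.
Proof.
move=> h; rewrite (big_addn 0 n.+1 c.+2).
by apply: eq_big_nat => i /andP [_ hi] /=; lia.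
Qed.

Lemma prodT p n : prime p -> (2 <= n)%N ->
  \prod_(i < n.+1) Tent p n i i =
  (p%:R) ^+ (\sum_(0 <= i < (cc n).+1) (n - 2 - i))%N * Q p ^+ (cc n).+1 *
  ((p%:R) ^+ (cc n).+1 / 24) *
  ((p%:R) ^+ (\sum_((cc n).+2 <= i < n.+1) (i - 2))%N * Q p ^+ (n.+1 - (cc n).+2)).
Proof.
move=> hp hn; have [c1 c2] := cc_facts n (ltnW hn).
rewrite -(big_mkord xpredT (fun i => Tent p n i i)).
rewrite (@big_cat_nat _ _ _ (cc n).+1) //; last by lia.
rewrite (@big_cat_nat _ _ _ (cc n).+2 (cc n).+1) //; last by lia.
rewrite big_nat1 diagD; last by lia.
rewrite (@eq_big_nat _ _ _ 0 _ _ (fun i => (p%:R) ^+ (n - 2 - i) * Q p)); last first.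
  by move=> i /andP [_ hi]; rewrite diagA //; lia.
rewrite (@eq_big_nat _ _ _ (cc n).+2 _ _ (fun i => (p%:R) ^+ (i - 2) * Q p)); last first.
  by move=> i /andP [hi1 hi2]; rewrite diagC //; lia.
rewrite !big_split /= !prodr_const_nat !expr_sum subn0 /Q !exprMn; ring.
Qed.

Theorem mainTheorem8 (p n : nat) (hp : prime p) (hp5 : (5 <= p)%N) (hn : (1 <= n)%N) :
  \det (Mmat p n) =
    if odd n then
      ((a_of p * b_of p) ^ n * p ^ ((n - 1) * (3 * n - 1) %/ 4))%:R / 24
    else
      ((a_of p * b_of p) ^ n * p ^ (n * (3 * n - 4) %/ 4))%:R / 24.
Proof.
have hdet : \det (Mmat p n) = \prod_(i < n.+1) Tent p n i i.
  by rewrite -detT // -MC // det_mulmx detC mulr1.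
have p0 : (p%:R : rat) != 0 by rewrite pnatr_eq0; case: (p) hp.
have Hab : ((a_of p * b_of p)%:R : rat) = Q p.
  apply: (@mulIf _ 24) => //; rewrite -natrM ab24 // /Q natrM natrB; last by lia.
  by rewrite natrD; field.
rewrite hdet !natrM !natrX Hab.
case: (ltngtP n 1) => [|hn2|->]; first by lia.
  rewrite prodT //.
  have [c1 c2] := cc_facts n hn; have hpar := cc_par n hn.
  set c := cc n in c1 c2 hpar *.
  set S1 := (\sum_(0 <= i < c.+1) (n - 2 - i))%N.
  set S2 := (\sum_(c.+2 <= i < n.+1) (i - 2))%N.
  have HQ : Q p ^+ n = Q p ^+ c.+1 * Q p ^+ (n.+1 - c.+2) by rewrite -exprD; congr (_ ^+ _); lia.
  have A1 := sumAP (n - 2 - c) c.+1; have A2 := sumAP c (n.+1 - c.+2).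
  have E1 : S1 = (\sum_(0 <= i < c.+1) ((n - 2 - c) + i))%N.
    by rewrite /S1 S1eq //; have := hpar; case: ifP => _; lia.
  have E2 : S2 = (\sum_(0 <= i < n.+1 - c.+2) (c + i))%N by rewrite /S2 S2eq //; lia.
  rewrite -E1 in A1; rewrite -E2 in A2; clearbody S1 S2 c.
  move: hpar; case: ifP => ho hpar.
    have [k hk] : exists k, c = k.+1 by exists c.-1; lia.
    have X1 : (n - 2 - c = k)%N by lia.
    have X2 : (n.+1 - c.+2 = k.+1)%N by lia.
    rewrite X1 hk in A1; rewrite X2 hk in A2.
    have He : ((n - 1) * (3 * n - 1) %/ 4 = S1 + c.+1 + S2)%N.
      rewrite (_ : n - 1 = 2 * k + 2)%N; last by lia.
      rewrite (_ : 3 * n - 1 = 6 * k + 8)%N; last by lia.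
      have -> : ((2 * k + 2) * (6 * k + 8) = (S1 + c.+1 + S2) * 4)%N by rewrite hk; nia.
      by rewrite mulnK.
    by rewrite He HQ !exprD; field.
  have X1 : (n - 2 - c = c)%N by lia.
  have X2 : (n.+1 - c.+2 = c.+1)%N by lia.
  rewrite X1 in A1; rewrite X2 in A2.
  have He : (n * (3 * n - 4) %/ 4 = S1 + c.+1 + S2)%N.
    rewrite (_ : 3 * n - 4 = 6 * c + 2)%N; last by lia.
    have -> : (n * (6 * c + 2) = (S1 + c.+1 + S2) * 4)%N by rewrite hpar; nia.
    by rewrite mulnK.
  by rewrite He HQ !exprD; field.
rewrite !big_ord_recr big_ord0 /= mul1r /Tent /Mentry /ee /lam /cc /Q /=.
by field.
Qed.
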